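(* Let $k\ge r\ge3$ and $p,t\ge0$ be integers, let $\pi\in\mathbb{C}_{=}(k,r|p,t)$ with $\pi^{(2)}_{p+1}=2t+2$, and let $s$ be the smallest positive integer such that $\pi^{(2)}_s=\pi^{(2)}_{p+1}+4(p-s+1)$ and $\pi^{(2)}_s$ is of starting type $s_0$ or $s_1$. Then: (1) $\pi^{(2)}_s+2$ does not occur in $\pi$; (2) for every $i<s$ with $\pi^{(2)}_i=\pi^{(2)}_{p+1}+4(p-i+1)$, the part $\pi^{(2)}_i$ is of starting type $s_3$.
   Context: A partition $\pi=(\pi_1,\dots,\pi_\ell)$ is a finite non-increasing sequence of positive integers; ''$a$ occurs in $\pi$'' means $a=\pi_i$ for some $i$. Göllnitz–Gordon marking: $GG(\pi)$ assigns a positive integer (mark) to each part, processing the parts from smallest to largest; $\pi_i$ receives the smallest positive integer different from the marks of all parts $\pi_g$ with $g>i$ and $\pi_i-\pi_g\le 2$, where $\pi_i-\pi_g<2$ is required when $\pi_i$ is odd. An ''$r$-marked part $a$'' is a part equal to $a$ with mark $r$. $N_i(\pi)$ is the number of parts with mark $i$; $\pi^{(i)}_1\ge\dots\ge\pi^{(i)}_{N_i(\pi)}$ are the parts with mark $i$, with $\pi^{(i)}_0=+\infty$, $\pi^{(i)}_{N_i(\pi)+1}=-\infty$. $\mathbb{C}(k,r)$: partitions with (i) no odd part repeated; (ii) $\pi_i\ge\pi_{i+k-1}+2$ for $1\le i\le\ell-k+1$, strict if $\pi_i$ even; (iii) at most $r-1$ parts $\le 2$. Starting types: for $\pi\in\mathbb{C}(k,r)$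 with $N_2=N_2(\pi)\ge1$, let $l$ be the largest integer in $\{0,\dots,N_2\}$ such that no odd part of $\pi$ is $\ge\pi^{(2)}_l$; for $l<i\le N_2$, $\pi^{(2)}_i$ has type $s_{-1}$. For $b=1,\dots,l$ in increasing order, type and auxiliary $\sigma_b$: for $b=1$: Case 1: 1-marked part $\pi^{(2)}_1-1$ exists and $\pi^{(2)}_1+2$ does not occur: type $s_0$, $\sigma_1=\pi^{(2)}_1-1$; Case 2: 1-marked $\pi^{(2)}_1-2$ exists and $\pi^{(2)}_1+2$ does not occur: type $s_1$, $\sigma_1=\pi^{(2)}_1-2$; Case 3: 1-marked $\pi^{(2)}_1+2$ exists: type $s_2$, $\sigma_1=\pi^{(2)}_1+2$; Case 4: 1-marked $\pi^{(2)}_1$ exists: type $s_3$, $\sigma_1=\pi^{(2)}_1$. For $2\le b\le l$: Case 1: 1-marked $\pi^{(2)}_b-1$ exists and, if a 1-marked $\pi^{(2)}_b+2$ exists, $\sigma_{b-1}=\pi^{(2)}_b+2$: type $s_0$, $\sigma_b=\pi^{(2)}_b-1$; Case 2: same with $\pi^{(2)}_b-2$: type $s_1$, $\sigma_b=\pi^{(2)}_b-2$; Case 3: 1-marked $\pi^{(2)}_b+2$ exists and $\sigma_{b-1}\ne\pi^{(2)}_b+2$: type $s_2$, $\sigma_b=\pi^{(2)}_b+2$; Case 4: 1-marked $\pi^{(2)}_b$ exists: type $s_3$, $\sigma_b=\pi^{(2)}_b$. $\mathbb{C}_{=}(k,r|p,t)$: the set of $\pi\in\mathbb{C}(k,r)$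 such that (1) the largest odd part of $\pi$ is $2t+1$; (2) the mark of $2t+1$ in $GG(\pi)$ is at most $2$; (3) $\pi^{(2)}_p\ge 2t+2$ and $\pi^{(2)}_{p+1}\le 2t+2$; (4) if there is a 2-marked part $2t+2$ of starting type $s_0$, then $\pi^{(2)}_{p+1}=2t+2$ and there exists $1\le i\le p+1$ with $\pi^{(2)}_i=\pi^{(2)}_{p+1}+4(p-i+1)$ and $\pi^{(2)}_i$ occurring exactly once in $\pi$; (5) if there is a 2-marked part $2t+2$ of starting type $s_2$, then $\pi^{(2)}_p=2t+2$; (6) if $2t+2$ occurs in $\pi$ and there is no 2-marked part $2t+2$, then $\pi^{(2)}_p=2t+4$, it is of starting type $s_3$, and there exists $1\le i\le p$ with $\pi^{(2)}_i=\pi^{(2)}_p+4(p-i)$ such that $\pi^{(2)}_i+2$ does not occur in $\pi$. *)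

(* Defs.v *)
(* Partitions are sequences of nat, listed non-increasingly
   (pi = [:: pi_1; ...; pi_l]); indices in the paper are 1-based. *)
From mathcomp Require Import all_boot all_order all_algebra.
Set Implicit Arguments. Unset Strict Implicit. Unset Printing Implicit Defensive.

Definition is_partition (pi : seq nat) : bool :=
  sorted geq pi && all (fun x => 0 < x) pi.

Definition mex1 (L : seq nat) : nat :=
  head 1 [seq n <- iota 1 (size L).+1 | n \notin L].

(* Goellnitz-Gordon conflict: part x (larger index-wise earlier) vs a
   smaller-or-equal part y (later in the list): x - y <= 2, and x - y < 2
   when x is odd. *)
Definition gg_conflict (x y : nat) : bool :=
  if odd x then x < y + 2 else x <= y + 2.

(* GG(pi): list of marks, aligned with pi; parts processed from the
   smallest (end of the list) to the largest. *)
Fixpoint gg (s : seq nat) : seq nat :=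
  match s with
  | [::] => [::]
  | x :: s' =>
      let ms := gg s' in
      mex1 [seq m.2 | m <- zip s' ms & gg_conflict x m.1] :: ms
  end.

Definition marked1 (pi : seq nat) (a : nat) : bool :=
  has (fun x => (x.1 == a) && (x.2 == 1)) (zip pi (gg pi)).

Definition parts_mark (i : nat) (pi : seq nat) : seq nat :=
  [seq x.1 | x <- zip pi (gg pi) & x.2 == i].

Definition N2 (pi : seq nat) : nat := size (parts_mark 2 pi).

(* pi^(2)_j for 1 <= j <= N_2 *)
Definition pi2 (pi : seq nat) (j : nat) : nat := nth 0 (parts_mark 2 pi) j.-1.

(* extended values, for pi^(2)_0 = +oo and pi^(2)_{N_2+1} = -oo *)
Inductive ext := EPinf | EFin of nat | EMinf.

Definition ext_le (a b : ext) : bool :=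
  match a, b with
  | EMinf, _ => true
  | _, EPinf => true
  | EFin x, EFin y => x <= y
  | _, _ => false
  end.

(* pi^(2)_j as an extended value (indices > N_2 + 1 also give -oo; they
   never matter) *)
Definition pi2x (pi : seq nat) (j : nat) : ext :=
  if j == 0 then EPinf else if j <= N2 pi then EFin (pi2 pi j) else EMinf.

(* the integer l of the starting-type definition: the largest j in
   {0..N_2} such that no odd part of pi is >= pi^(2)_j *)
Definition lstart (pi : seq nat) : nat :=
  \max_(j < (N2 pi).+1 |
        (j == 0 :> nat) || all (fun x => ~~ odd x || (x < pi2 pi j)) pi) j.

Inductive stype := Sm1 | S0 | S1 | S2 | S3.

(* one step of the starting-type procedure for a 2-marked part v;
   first = (b == 1); sigprev = sigma_{b-1}.  Cases are tried in order. *)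
Definition stype_step (pi : seq nat) (first : bool) (sigprev : option nat)
    (v : nat) : option (stype * nat) :=
  if first then
    if marked1 pi (v - 1) && (v + 2 \notin pi) then Some (S0, v - 1)
    else if marked1 pi (v - 2) && (v + 2 \notin pi) then Some (S1, v - 2)
    else if marked1 pi (v + 2) then Some (S2, v + 2)
    else if marked1 pi v then Some (S3, v)
    else None
  else
    let c := marked1 pi (v + 2) ==> (sigprev == Some (v + 2)) in
    if marked1 pi (v - 1) && c then Some (S0, v - 1)
    else if marked1 pi (v - 2) && c then Some (S1, v - 2)
    else if marked1 pi (v + 2) && (sigprev != Some (v + 2)) then Some (S2, v + 2)
    else if marked1 pi v then Some (S3, v)
    else None.

Fixpoint stypes_aux (pi : seq nat) (first : bool) (sig : option nat)
    (vs : seq nat) : seq (option stype) :=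
  match vs with
  | [::] => [::]
  | v :: vs' =>
      let r := stype_step pi first sig v in
      omap fst r :: stypes_aux pi false (omap snd r) vs'
  end.

(* starting type of the 2-marked part pi^(2)_j (1 <= j <= N_2);
   None when j is out of range or no case applies *)
Definition start_type (pi : seq nat) (j : nat) : option stype :=
  if (0 < j) && (j <= N2 pi) then
    if j <= lstart pi then
      nth None (stypes_aux pi true None (take (lstart pi) (parts_mark 2 pi))) j.-1
    else Some Sm1
  else None.

Definition inC (k r : nat) (pi : seq nat) : Prop :=
  is_partition pi /\
  (forall x, odd x -> count_mem x pi <= 1) /\
  (forall i, i + k - 1 < size pi ->
     if odd (nth 0 pi i) then nth 0 pi (i + k - 1) + 2 <= nth 0 pi i
     else nth 0 pi (i + k - 1) + 2 < nth 0 pi i) /\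
  count (fun x => x <= 2) pi <= r - 1.

Definition has2_type (pi : seq nat) (a : nat) (T : stype) : Prop :=
  exists j, [/\ 0 < j, j <= N2 pi, pi2 pi j = a & start_type pi j = Some T].

Definition inCeq (k r p t : nat) (pi : seq nat) : Prop :=
  inC k r pi /\
  ((2 * t + 1) \in pi /\ forall x, x \in pi -> odd x -> x <= 2 * t + 1) /\
  (exists i, [/\ i < size pi, nth 0 pi i = 2 * t + 1 & nth 0 (gg pi) i <= 2]) /\
  (ext_le (EFin (2 * t + 2)) (pi2x pi p) /\ ext_le (pi2x pi p.+1) (EFin (2 * t + 2))) /\
  (has2_type pi (2 * t + 2) S0 ->
     pi2x pi p.+1 = EFin (2 * t + 2) /\
     exists i, [/\ 1 <= i, i <= p.+1,
                   pi2 pi i = pi2 pi p.+1 + 4 * (p.+1 - i)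
                 & count_mem (pi2 pi i) pi = 1]) /\
  (has2_type pi (2 * t + 2) S2 -> pi2x pi p = EFin (2 * t + 2)) /\
  ((2 * t + 2) \in pi ->
   ~ (exists j, [/\ 0 < j, j <= N2 pi & pi2 pi j = 2 * t + 2]) ->
     pi2x pi p = EFin (2 * t + 4) /\ start_type pi p = Some S3 /\
     exists i, [/\ 1 <= i, i <= p, pi2 pi i = pi2 pi p + 4 * (p - i)
                 & (pi2 pi i + 2) \notin pi]).

(* the property defining s in Lemma 2.13 (integer arithmetic for p - s + 1) *)
Definition s_prop (pi : seq nat) (p s : nat) : Prop :=
  [/\ 0 < s, s <= N2 pi,
      ((pi2 pi s)%:Z = (pi2 pi p.+1)%:Z + 4 * (p%:Z - s%:Z + 1))%R
    & start_type pi s = Some S0 \/ start_type pi s = Some S1].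

(* Main.v *)
Require Import Defs.
From mathcomp Require Import all_boot all_order all_algebra.
From mathcomp Require Import zify.
Set Implicit Arguments. Unset Strict Implicit. Unset Printing Implicit Defensive.

Lemma mex1_notin L : mex1 L \notin L.
Proof.
rewrite /mex1. set F := [seq n <- iota 1 (size L).+1 | n \notin L].
have Hne : F != [::].
  apply/eqP => HF.
  have Hsub : {subset iota 1 (size L).+1 <= L}.
    move=> n Hn; apply/negPn/negP => Hn'.
    have : n \in F by rewrite mem_filter Hn' Hn.
    by rewrite HF.
  have := uniq_leq_size (iota_uniq 1 (size L).+1) Hsub.
  by rewrite size_iota ltnn.
have Hin : head 1 F \in F by move: Hne; case: F => //= a ? _; rewrite mem_head.
by move: Hin; rewrite mem_filter => /andP[].
Qed.

Lemma mex1_1 L : 1 \notin L -> mex1 L = 1.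
Proof. by move=> H; rewrite /mex1 /= H. Qed.

Lemma size_gg s : size (gg s) = size s.
Proof. by elim: s => //= x s ->. Qed.

Lemma geq_trans : transitive geq.
Proof. by move=> a b c /= h1 h2; exact: leq_trans h2 h1. Qed.

Lemma sorted_cons_le x s : sorted geq (x :: s) -> forall y, y \in s -> y <= x.
Proof. by move=> /(order_path_min geq_trans) /allP H y /H. Qed.

Lemma zip_mem1 (a m : nat) s t : (a, m) \in zip s t -> a \in s.
Proof.
elim: s t => [|x s IH] [|y t] //=; rewrite in_cons => /orP [/eqP [-> _]|H].
  by rewrite mem_head.
by rewrite in_cons (IH t H) orbT.
Qed.

Lemma mem_zip_gg s a : a \in s -> exists m, (a, m) \in zip s (gg s).
Proof.
move=> /(nthP 0) [i Hi <-]. exists (nth 0 (gg s) i).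
rewrite -nth_zip; last by rewrite size_gg.
by apply: mem_nth; rewrite size_zip size_gg minnn.
Qed.

Lemma gg_after s : sorted geq s -> forall a ma b mb,
  (a, ma) \in zip s (gg s) -> (b, mb) \in zip s (gg s) ->
  b < a -> gg_conflict a b -> ma != mb.
Proof.
elim: s => [|x s IH] //= Hs a ma b mb.
have Hs' : sorted geq s := path_sorted Hs.
have Hle := sorted_cons_le Hs.
rewrite !in_cons.
case/orP => [/eqP [-> ->] | Ha]; case/orP => [/eqP [-> ->] | Hb].
- by rewrite ltnn.
- move=> _ Hc; apply/eqP => E.
  have := mex1_notin [seq m.2 | m <- zip s (gg s) & gg_conflict x m.1].
  rewrite E => /negP; apply; apply/mapP; exists (b, mb) => //.
  by rewrite mem_filter /= Hc Hb.
- move=> Hlt; have := Hle _ (zip_mem1 Ha). by rewrite leqNgt Hlt.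
- exact: IH.
Qed.

Lemma gg_one s : sorted geq s -> forall a m, (a, m) \in zip s (gg s) -> m != 1 ->
  exists b, [/\ b <= a, gg_conflict a b & (b, 1) \in zip s (gg s)].
Proof.
elim: s => [|x s IH] //= Hs a m.
have Hs' : sorted geq s := path_sorted Hs.
have Hle := sorted_cons_le Hs.
rewrite in_cons; case/orP => [/eqP [-> ->] | Ha] Hm.
- case: (boolP (1 \in [seq m.2 | m <- zip s (gg s) & gg_conflict x m.1])); last first.
    by move=> /mex1_1 E; rewrite E in Hm.
  case/mapP => [[b mb]] /=; rewrite mem_filter /= => /andP [Hc Hb] E.
  rewrite -E in Hb.
  exists b; split => //; first exact: Hle (zip_mem1 Hb).
  by rewrite in_cons Hb orbT.
- have [b [H1 H2 H3]] := IH Hs' a m Ha Hm.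
  by exists b; split => //; rewrite in_cons H3 orbT.
Qed.

Lemma pm_mem i s y : y \in parts_mark i s -> (y, i) \in zip s (gg s).
Proof.
rewrite /parts_mark => /mapP [[a b]] /=; rewrite mem_filter /= => /andP [/eqP E H] ->.
by rewrite -E.
Qed.

Lemma pm2_pw s : sorted geq s ->
  pairwise (fun a b => (b <= a) && ~~ gg_conflict a b) (parts_mark 2 s).
Proof.
elim: s => [|x s IH] //= Hs.
have Hs' : sorted geq s := path_sorted Hs.
have Hle := sorted_cons_le Hs.
have IH' := IH Hs'.
rewrite /parts_mark /=.
case: ifP => H2 //=.
rewrite /= IH' andbT.
apply/allP => y Hy.
have Hz := pm_mem Hy.
rewrite (Hle _ (zip_mem1 Hz)) /=.
apply/negP => Hc.
have := mex1_notin [seq m.2 | m <- zip s (gg s) & gg_conflict x m.1].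
move/eqP: H2 => ->. move/negP; apply; apply/mapP; exists (y, 2) => //.
by rewrite mem_filter /= Hc Hz.
Qed.

Lemma marked1E pi a : marked1 pi a = ((a, 1) \in zip pi (gg pi)).
Proof.
rewrite /marked1; apply/hasP/idP => [[[x m] Hin /andP [/eqP <- /eqP <-]] // | H].
by exists (a, 1) => //=; rewrite !eqxx.
Qed.

Lemma step_spec pi f sg w T sig : stype_step pi f sg w = Some (T, sig) ->
  [\/ [/\ T = S0, sig = w - 1 & marked1 pi (w - 1)],
      [/\ T = S1, sig = w - 2 & marked1 pi (w - 2)],
      [/\ T = S2, sig = w + 2 & marked1 pi (w + 2)] |
      [/\ T = S3, sig = w & marked1 pi w]].
Proof.
rewrite /stype_step.
case: f.
- case: ifP => [/andP [H _] [<- <-] | _]; first by apply: Or41.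
  case: ifP => [/andP [H _] [<- <-] | _]; first by apply: Or42.
  case: ifP => [H [<- <-] | _]; first by apply: Or43.
  case: ifP => [H [<- <-] | _] //; by apply: Or44.
- case: ifP => [/andP [H _] [<- <-] | _]; first by apply: Or41.
  case: ifP => [/andP [H _] [<- <-] | _]; first by apply: Or42.
  case: ifP => [/andP [H _] [<- <-] | _]; first by apply: Or43.
  case: ifP => [H [<- <-] | _] //; by apply: Or44.
Qed.

Fixpoint st_at pi (first : bool) (sig : option nat) (vs : seq nat) (n : nat)
  : bool * option nat :=
  match vs, n with
  | v :: vs', n'.+1 => st_at pi false (omap snd (stype_step pi first sig v)) vs' n'
  | _, _ => (first, sig)
  end.

Lemma st_at_nth pi first sig vs n : n < size vs ->
  nth None (stypes_aux pi first sig vs) n =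
  omap fst (stype_step pi (st_at pi first sig vs n).1 (st_at pi first sig vs n).2 (nth 0 vs n)).
Proof.
elim: vs first sig n => [|v vs IH] first sig [|n] //= Hn.
exact: IH.
Qed.

Lemma st_at_succ pi first sig vs n : n < size vs ->
  st_at pi first sig vs n.+1 =
  (false, omap snd (stype_step pi (st_at pi first sig vs n).1 (st_at pi first sig vs n).2 (nth 0 vs n))).
Proof.
elim: vs first sig n => [|v vs IH] first sig [|n] //= Hn.
- by case: vs {IH Hn}.
- exact: IH.
Qed.

Lemma st_at_first pi sig vs n : (st_at pi true sig vs n).1 = (n == 0) || (size vs == 0).
Proof.
case: vs n => [|v vs] [|n] //=.
elim: vs n (omap _ _) => [|w vs IH] [|n] sg //=.
Qed.

Lemma step_some pi f sg w :
  marked1 pi w || marked1 pi (w - 1) || marked1 pi (w - 2) ->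
  ((w + 2) \in pi -> marked1 pi (w + 2) || marked1 pi w) ->
  stype_step pi f sg w <> None.
Proof.
move=> H1 H2; rewrite /stype_step.
case: f.
- case: (boolP ((w + 2) \in pi)) => Hin /=.
  + have := H2 Hin.
    case: (marked1 pi (w+2)); case: (marked1 pi w);
      case: (marked1 pi (w-1)); case: (marked1 pi (w-2)) => //.
  + move: H1.
    case: (marked1 pi (w+2)); case: (marked1 pi w);
      case: (marked1 pi (w-1)); case: (marked1 pi (w-2)) => //.
- move: H1.
  case: (marked1 pi (w+2)); case: (marked1 pi w);
    case: (marked1 pi (w-1)); case: (marked1 pi (w-2)); case: (sg == Some (w+2)) => //.
Qed.

Lemma lstart_spec pi : lstart pi <= N2 pi /\
  (0 < lstart pi -> forall x, x \in pi -> odd x -> x < pi2 pi (lstart pi)).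
Proof.
rewrite /lstart.
elim/big_ind: _.
- by [].
- move=> a b [Ha1 Ha2] [Hb1 Hb2]; rewrite /maxn; case: ifP => _; by split.
- move=> i /orP [/eqP -> // | /allP Hall]; split; first by rewrite -ltnS ltn_ord.
  move=> _ x Hx Ho; move: (Hall x Hx); by rewrite Ho.
Qed.

Definition stt pi n := st_at pi true None (take (lstart pi) (parts_mark 2 pi)) n.

Lemma type_eq pi j : 0 < j -> j <= lstart pi ->
  start_type pi j = omap fst (stype_step pi (stt pi j.-1).1 (stt pi j.-1).2 (pi2 pi j)).
Proof.
move=> Hj Hjl.
have [HlN _] := lstart_spec pi.
have HjN : j <= N2 pi := leq_trans Hjl HlN.
rewrite /start_type Hj HjN Hjl /=.
have Hsz : size (take (lstart pi) (parts_mark 2 pi)) = lstart pi by rewrite size_takel.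
rewrite st_at_nth; last by rewrite Hsz; lia.
by rewrite nth_take; last lia.
Qed.

Lemma stt_first pi n : 0 < lstart pi -> (stt pi n).1 = (n == 0).
Proof.
move=> Hl; rewrite /stt st_at_first.
have [HlN _] := lstart_spec pi.
rewrite size_takel //. by case: (n == 0); case: (lstart pi) Hl.
Qed.

Lemma stt_succ pi n : n.+1 < lstart pi ->
  stt pi n.+1 = (false, omap snd (stype_step pi (stt pi n).1 (stt pi n).2 (pi2 pi n.+1))).
Proof.
move=> Hn.
have [HlN _] := lstart_spec pi.
rewrite /stt st_at_succ; last by rewrite size_takel //; lia.
by rewrite nth_take; last lia.
Qed.

Theorem lemma2p13 (k r p t : nat) (pi : seq nat) :
  3 <= r -> r <= k ->
  inCeq k r p t pi ->
  pi2x pi p.+1 = EFin (2 * t + 2) ->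
  forall s : nat,
    s_prop pi p s ->
    (forall s' : nat, 0 < s' -> s' < s -> ~ s_prop pi p s') ->
    (pi2 pi s + 2) \notin pi /\
    (forall i : nat, 0 < i -> i < s ->
       ((pi2 pi i)%:Z = (pi2 pi p.+1)%:Z + 4 * (p%:Z - i%:Z + 1))%R ->
       start_type pi i = Some S3).
Proof.
move=> _ _ [[Hpart _] _] Hp1 s [Hs0 HsN Heqs HTs] Hmin.
move/andP: Hpart => [Hsort Hposall].
have Hpos : forall x, x \in pi -> 0 < x by move=> x; move/allP: Hposall; apply.
move: Hp1; rewrite /pi2x /=; case: ifP => // Hp1N [Hp1v].
have [HlN Hlodd] := lstart_spec pi.
set l := lstart pi in HlN Hlodd.
have Hsl : s <= l.
  case: (leqP s l) => // H; move: HTs; rewrite /start_type Hs0 HsN /= leqNgt H /=.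
  by case.
have Hl0 : 0 < l by apply: leq_trans Hsl.
have Hsl' : s <= lstart pi := Hsl.
have Hpw := pm2_pw Hsort.
have Hpw' : forall j j', 0 < j -> j < j' -> j' <= N2 pi ->
    (pi2 pi j' <= pi2 pi j) && ~~ gg_conflict (pi2 pi j) (pi2 pi j').
  move=> j j' Hj Hjj' Hj'.
  rewrite /pi2. move/(pairwiseP 0): Hpw; apply; rewrite /N2 in Hj'; rewrite ?inE /=. all: try lia.
have Hmark : forall j, 0 < j -> j <= N2 pi -> (pi2 pi j, 2) \in zip pi (gg pi).
  move=> j Hj HjN; apply: pm_mem; rewrite /pi2; apply: mem_nth.
  by rewrite prednK.
have Hin : forall j, 0 < j -> j <= N2 pi -> pi2 pi j \in pi.
  by move=> j Hj HjN; apply: zip_mem1 (Hmark j Hj HjN).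
have Hodd : forall j x, 0 < j -> j <= l -> x \in pi -> odd x -> x < pi2 pi j.
  move=> j x Hj Hjl Hx Ho.
  have H0 := Hlodd Hl0 x Hx Ho.
  case: (ltngtP j l) => [Hjl'|Hjl'|->] //.
  - have /andP [H _] := Hpw' j l Hj Hjl' HlN. lia.
  - lia.
have Heven : forall j, 0 < j -> j <= l -> ~~ odd (pi2 pi j).
  move=> j Hj Hjl; apply/negP => Ho.
  have := Hodd j _ Hj Hjl (Hin j Hj (leq_trans Hjl HlN)) Ho. by rewrite ltnn.
have Hgap : forall j j', 0 < j -> j < j' -> j' <= l -> pi2 pi j' + 4 <= pi2 pi j.
  move=> j j' Hj Hjj' Hj'.
  have /andP [H1 H2] := Hpw' j j' Hj Hjj' (leq_trans Hj' HlN).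
  have E1 := Heven j Hj (ltnW (leq_trans Hjj' Hj')).
  have E2 := Heven j' (ltn_trans Hj Hjj') Hj'.
  move: H2; rewrite /gg_conflict (negbTE E1) -ltnNge => H2. lia.
have Hgapn : forall d j, 0 < j -> j + d <= l -> pi2 pi (j + d) + 4 * d <= pi2 pi j.
  elim=> [|d IH] j Hj Hjd; first by rewrite addn0 muln0 addn0.
  have := IH j Hj (ltac:(lia)).
  have := Hgap (j + d) (j + d.+1) (ltn_addr _ Hj) (ltac:(lia)) (ltac:(lia)).
  lia.
have Hnear2 : forall x, ~~ odd x -> (x + 1) \notin pi -> (x + 2) \in pi ->
    marked1 pi (x + 2) || marked1 pi x.
  move=> x Hx Hx1 Hx2.
  have [m Hm] := mem_zip_gg Hx2.
  case: (eqVneq m 1) => [E | Hm1].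
    by subst m; rewrite marked1E Hm.
  have [b [Hb1 Hb2 Hb3]] := gg_one Hsort Hm Hm1.
  move: Hb2; rewrite /gg_conflict oddD (negbTE Hx) /= => Hb2.
  have : b = x \/ b = x + 1 \/ b = x + 2 by lia.
  case=> [Eb | [Eb | Eb]].
  - by rewrite !marked1E -Eb Hb3 orbT.
  - by move: Hx1; rewrite -Eb (zip_mem1 Hb3).
  - by rewrite marked1E -Eb Hb3.
have Hone : forall j, 0 < j -> j <= N2 pi ->
    marked1 pi (pi2 pi j) || marked1 pi (pi2 pi j - 1) || marked1 pi (pi2 pi j - 2).
  move=> j Hj HjN.
  have [b [Hb1 Hb2 Hb3]] := gg_one Hsort (Hmark j Hj HjN) (isT : 2 != 1).
  have : b = pi2 pi j \/ b = pi2 pi j - 1 \/ b = pi2 pi j - 2.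
    move: Hb2; rewrite /gg_conflict; case: (odd (pi2 pi j)) => H; lia.
  case=> [Eb | [Eb | Eb]]; rewrite !marked1E -Eb Hb3; by rewrite ?orbT.
have Hexcl : forall a b, b < a -> gg_conflict a b -> marked1 pi a -> marked1 pi b -> False.
  move=> a b Hab Hc; rewrite !marked1E => Ha Hb.
  by have := gg_after Hsort Ha Hb Hab Hc; rewrite eqxx.
set v := pi2 pi s.
have Hvev : ~~ odd v := Heven s Hs0 Hsl.
have Hvpos : 0 < v := Hpos _ (Hin s Hs0 HsN).
have Hv1 : (v + 1) \notin pi.
  apply/negP => H; have := Hodd s (v + 1) Hs0 Hsl H.
  move: Hvev; rewrite -/v; lia.
have Hpart1 : (v + 2) \notin pi.
  apply/negP => Hv2in.
  have Hm : marked1 pi (v + 2).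
    case/orP: (Hnear2 v Hvev Hv1 Hv2in) => // Hmv.
    exfalso.
    move: HTs; rewrite (@type_eq pi _ Hs0 Hsl) -/v.
    case E: (stype_step _ _ _ _) => [[T sg]|] /=; last by case.
    have [[-> _ H]|[-> _ H]|[-> _ H]|[-> _ H]] := step_spec E; try by case.
    + move=> _; apply: (Hexcl v (v - 1)) => //; first lia.
      rewrite /gg_conflict (negbTE Hvev); lia.
    + move=> _; apply: (Hexcl v (v - 2)) => //; first lia.
      rewrite /gg_conflict (negbTE Hvev); lia.
  case: (ltngtP s 1) => Hs1; first lia.
  -
    have Hs1' : s.-1.+1 = s by lia.
    have Hst : stt pi s.-1 = (false, omap snd (stype_step pi (stt pi s.-2).1 (stt pi s.-2).2 (pi2 pi s.-1))).
      have -> : s.-1 = s.-2.+1 by lia.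
      rewrite stt_succ; last lia.
      by have -> : s.-2.+1 = s.-1 by lia.
    move: HTs; rewrite (@type_eq pi _ Hs0 Hsl) -/v Hst /=.
    set sg := omap snd _.
    case: (eqVneq sg (Some (v + 2))) => Hsg; last first.
      rewrite /stype_step Hm /= !andbF /=. by case.
    move=> HT.
    move: Hsg; rewrite /sg.
    case E: (stype_step _ _ _ _) => [[T sg']|] //= [Esg].
    have Hw := Hgap s.-1 s (ltac:(lia)) (ltac:(lia)) Hsl.
    have Hwev := Heven s.-1 (ltac:(lia)) (ltac:(lia)).
    rewrite -/v in Hw.
    have [[ET Es _]|[ET Es _]|[ET Es _]|[ET Es _]] := step_spec E; try lia.
    apply: (Hmin s.-1); [lia | lia | ].
    split; [lia | lia | | ].
    + have ->: pi2 pi s.-1 = v + 4 by lia.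
      move: Heqs; rewrite -/v. lia.
    + right. rewrite (@type_eq pi _ (ltac:(lia) : 0 < s.-1) (ltac:(lia))) E ET. done.
  -
    move: HTs; rewrite (@type_eq pi _ Hs0 Hsl) -/v stt_first // Hs1 /=.
    rewrite /stype_step /= Hv2in Hm !andbF /=. by case.
split => //.
move=> i Hi0 His Heqi.
have Hpi_i : pi2 pi i = v + 4 * (s - i) by move: Heqi Heqs; rewrite -/v; lia.
have Hall : forall j, i <= j -> j <= s -> pi2 pi j = v + 4 * (s - j).
  move=> j Hij Hjs.
  have H1 := Hgapn (j - i) i Hi0 (ltac:(lia)).
  have H2 := Hgapn (s - j) j (ltac:(lia)) (ltac:(lia)).
  have E1 : i + (j - i) = j by lia.
  have E2 : j + (s - j) = s by lia.
  rewrite E1 in H1; rewrite E2 -/v in H2. lia.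
have Hn01 : forall j, i <= j -> j < s ->
    start_type pi j <> Some S0 /\ start_type pi j <> Some S1.
  move=> j Hij Hjs.
  have Hsp : forall T, (T = S0 \/ T = S1) -> start_type pi j = Some T -> False.
    move=> T HT HTj; apply: (Hmin j); [lia | lia | ].
    split; [lia | lia | | ].
    - have := Hall j Hij (ltnW Hjs). move: Heqs; rewrite -/v. lia.
    - by case: HT => <-; [left | right].
  split => H; [exact: (Hsp S0 (or_introl erefl) H) | exact: (Hsp S1 (or_intror erefl) H)].
have Hprop : forall j, i <= j -> j < s ->
    start_type pi j = Some S2 -> start_type pi j.+1 = Some S2.
  move=> j Hij Hjs.
  have Hj0 : 0 < j by lia.
  rewrite (@type_eq pi _ Hj0 (ltac:(lia))).
  case E: (stype_step _ _ _ _) => [[T sg]|] //= [ET].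
  have [[ET' _ _]|[ET' _ _]|[_ Es Hm2]|[ET' _ _]] := step_spec E; try by rewrite ET in ET'.
  set x := pi2 pi j in E Es Hm2.
  have Hx : x = v + 4 * (s - j) by exact: Hall j Hij (ltnW Hjs).
  have Hy : pi2 pi j.+1 = x - 4 by rewrite Hall //; lia.
  have Hmy : marked1 pi (x - 2).
    have := Hone j Hj0 (ltac:(lia)). rewrite -/x.
    case/orP => [/orP [H | H] | //].
    - exfalso; apply: (Hexcl (x + 2) x) => //; first lia.
      rewrite /gg_conflict oddD (negbTE (Heven j Hj0 (ltac:(lia)))) /=; lia.
    - exfalso.
      have Hx1 : x - 1 \in pi by move: H; rewrite marked1E => /zip_mem1.
      have := Hodd s (x - 1) Hs0 Hsl Hx1.
      have := Heven j Hj0 (ltac:(lia)). rewrite -/x -/v. lia.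
  rewrite (@type_eq pi _ (ltac:(lia) : 0 < j.+1) (ltac:(lia))) /=.
  have Hstj : stt pi j = (false, Some (x + 2)).
    have Ej : j.-1.+1 = j by lia.
    have := @stt_succ pi j.-1 (ltac:(lia)). rewrite Ej => ->. by rewrite -/x E Es.
  rewrite Hstj.
  rewrite /= Hy.
  have -> : x - 4 - 1 = x - 5 by lia.
  have Hxy : x - 4 + 2 = x - 2 by lia.
  rewrite /stype_step /= Hxy Hmy /=.
  have Hne : (Some (x + 2) == Some (x - 2)) = false.
    apply/negP => /eqP [] ; lia.
  by rewrite Hne !andbF /=.
have HnS2 : start_type pi i <> Some S2.
  move=> H2.
  have Hind : forall d, i + d <= s -> start_type pi (i + d) = Some S2.
    elim=> [|d IH] Hd; first by rewrite addn0.
    rewrite addnS; apply: Hprop; [lia | lia | apply: IH; lia].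
  have := Hind (s - i) (ltac:(lia)).
  have -> : i + (s - i) = s by lia.
  move=> HS; case: HTs; by rewrite HS.
have [H0 H1] := Hn01 i (leqnn i) His.
move: H0 H1 HnS2; rewrite (@type_eq pi _ Hi0 (ltac:(lia))).
set x := pi2 pi i.
case E: (stype_step _ _ _ _) => [[T sg]|] /=.
- have [[-> _ _]|[-> _ _]|[-> _ _]|[-> _ _]] := step_spec E; by [].
- exfalso; apply: (step_some (Hone i Hi0 (ltac:(lia)))) E.
  move=> Hx2. apply: Hnear2 => //.
  + exact: Heven i Hi0 (ltac:(lia)).
  + apply/negP => Hx1; have := Hodd i (x + 1) Hi0 (ltac:(lia)) Hx1.
    have := Heven i Hi0 (ltac:(lia)). rewrite -/x. lia.
Qed.
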